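(* Let $B$ be a finite skew left brace and let $S$ be a maximal subbrace of $B$. Then either $\zeta(B)\subseteq S$ or $\partial(B)\subseteq S$. In particular, $\zeta(B)\cap\partial(B)\subseteq\Phi(B)$.
   Context: A skew left brace (brace) is a set $B$ with two group structures $(B,+)$ and $(B,\cdot)$ with $a(b+c)=ab-a+ac$; $\lambda_a(b)=-a+ab$. A subbrace is a subset that is a subgroup of both groups; a maximal subbrace is a proper subbrace not contained in any other proper subbrace. An ideal is a subset that is a normal subgroup of both groups and $\lambda_b$-invariant for all $b$. The centre is $\zeta(B)=\{a\in B: a+b=b+a=ab=ba\ \forall b\in B\}$. The derived ideal $\partial(B)=[B,B]$ is the smallest ideal of $B$ containing $[B,B]_+$, $[B,B]_\cdot$ and all $ab-(a+b)$. The Frattini subbrace $\Phi(B)$ is the intersection of all maximal subbraces of $B$ (or $B$ if none exist). *)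

(* Defs.v *)
From mathcomp Require Import all_boot.
Set Implicit Arguments. Unset Strict Implicit. Unset Printing Implicit Defensive.

Record skew_brace (T : finType) := SkewBrace {
  badd : T -> T -> T; bopp : T -> T; bzero : T;
  bmul : T -> T -> T; binv : T -> T; bone : T;
  baddA : forall a b c, badd a (badd b c) = badd (badd a b) c;
  badd0 : forall a, badd bzero a = a /\ badd a bzero = a;
  baddN : forall a, badd (bopp a) a = bzero /\ badd a (bopp a) = bzero;
  bmulA : forall a b c, bmul a (bmul b c) = bmul (bmul a b) c;
  bmul1 : forall a, bmul bone a = a /\ bmul a bone = a;
  bmulV : forall a, bmul (binv a) a = bone /\ bmul a (binv a) = bone;
  bbrace : forall a b c,
    bmul a (badd b c) = badd (badd (bmul a b) (bopp a)) (bmul a c)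
}.

Section SkewBraceDefs.
Variables (T : finType) (B : skew_brace T).
Local Notation "a + b" := (badd B a b).
Local Notation "- a" := (bopp B a).
Local Notation "a * b" := (bmul B a b).

Definition blambda (a b : T) : T := - a + a * b.

Definition is_subbrace (S : {set T}) : bool :=
  [&& bzero B \in S, bone B \in S,
      [forall a in S, forall b in S, (a + b \in S) && (a * b \in S)] &
      [forall a in S, (- a \in S) && (binv B a \in S)]].

Definition is_maximal_subbrace (M : {set T}) : bool :=
  [&& is_subbrace M, M != setT &
      [forall S : {set T}, (is_subbrace S && (S != setT) && (M \subset S)) ==> (S == M)]].

Definition is_ideal (I : {set T}) : bool :=
  [&& is_subbrace I,
      [forall a in I, forall b, (b + a + - b \in I) && (b * a * binv B b \in I)] &
      [forall a in I, forall b, blambda b a \in I]].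

Definition bcentre : {set T} :=
  [set a | [forall b, [&& a + b == b + a, b + a == a * b & a * b == b * a]]].

Definition derived_gens : {set T} :=
  [set x | [exists a, exists b,
     [|| x == a + b + - a + - b,
         x == a * b * binv B a * binv B b |
         x == a * b + - (a + b)]]].

Definition bderived : {set T} :=
  \bigcap_(I : {set T} | is_ideal I && (derived_gens \subset I)) I.

(* intersection of all maximal subbraces (the empty intersection is setT = B) *)
Definition bfrattini : {set T} :=
  \bigcap_(M : {set T} | is_maximal_subbrace M) M.

End SkewBraceDefs.

(* Main.v *)
Require Import Defs.
From mathcomp Require Import all_boot.
Set Implicit Arguments. Unset Strict Implicit. Unset Printing Implicit Defensive.

Definition isgrp (U : Type) (op : U -> U -> U) (inv : U -> U) (e : U) :=
  [/\ forall a b c, op a (op b c) = op (op a b) c,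
      forall x, op e x = x /\ op x e = x &
      forall x, op (inv x) x = e /\ op x (inv x) = e].

Section Grp.
Variables (U : Type) (op : U -> U -> U) (inv : U -> U) (e : U).
Lemma gR1 (H : isgrp op inv e) u y : op (op u y) (inv y) = u.
Proof. case: H => A Un V. by rewrite -A (proj2 (V y)) (proj2 (Un u)). Qed.
Lemma gR2 (H : isgrp op inv e) u y : op (op u (inv y)) y = u.
Proof. case: H => A Un V. by rewrite -A (proj1 (V y)) (proj2 (Un u)). Qed.
Lemma gL1 (H : isgrp op inv e) u y : op (inv y) (op y u) = u.
Proof. case: H => A Un V. by rewrite A (proj1 (V y)) (proj1 (Un u)). Qed.
Lemma gcancel (H : isgrp op inv e) x y y' : op x y = op x y' -> y = y'.
Proof. by move=> E; rewrite -(gL1 H y x) E (gL1 H). Qed.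
Lemma ginvM (H : isgrp op inv e) x y : inv (op x y) = op (inv y) (inv x).
Proof.
apply: (gcancel H (x := op x y)).
have [A Un V] := H.
by rewrite (proj2 (V _)) !A (gR1 H) (proj2 (V x)).
Qed.
Lemma ginv_cen (H : isgrp op inv e) c :
  (forall u, op c u = op u c) -> forall u, op (inv c) u = op u (inv c).
Proof.
move=> hc u; have [A Un V] := H.
transitivity (op (op (op (inv c) u) c) (inv c)); first by rewrite (gR1 H).
by rewrite -(A (inv c) u c) -hc (gL1 H).
Qed.
Lemma gop_cen (H : isgrp op inv e) c x y d :
  (forall u, op c u = op u c) -> op (op x c) (op y d) = op (op x y) (op c d).
Proof.
move=> hc; have [A Un V] := H.
by rewrite -!A (A c y d) hc -A.
Qed.
Lemma gconj (H : isgrp op inv e) c x a :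
  (forall u, op c u = op u c) -> op (op (op x c) a) (inv (op x c)) = op (op x a) (inv x).
Proof.
move=> hc; have [A Un V] := H.
rewrite (ginvM H) -(A x c a) hc A !A gR1 //.
Qed.
Lemma gmv (H : isgrp op inv e) c P Q :
  (forall u, op c u = op u c) -> op (op P c) Q = op (op P Q) c.
Proof. by move=> hc; have [A Un V] := H; rewrite -A hc A. Qed.
Lemma gcomm (H : isgrp op inv e) c d x y :
  (forall u, op c u = op u c) -> (forall u, op d u = op u d) ->
  op (op (op (op x c) (op y d)) (inv (op x c))) (inv (op y d)) =
  op (op (op x y) (inv x)) (inv y).
Proof.
move=> hc hd; have [A Un V] := H.
have hic := ginv_cen H hc; have hid := ginv_cen H hd.
have hW : forall u, op (op c d) u = op u (op c d).
  by move=> u; rewrite -A hd A hc -A.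
rewrite !(ginvM H) (gop_cen H _ _ _ hc) (hic (inv x)) (hid (inv y)).
set W := op c d in hW *.
rewrite (gmv H _ _ hW) (gmv H _ _ hW) (A (op x y)) (gmv H _ _ hic) (A _ (inv y)).
rewrite -!A; congr (op _ _); rewrite /W (A (inv c) c d) (proj1 (V c)) (proj1 (Un d)).
by rewrite (proj1 (V d)) (proj2 (Un _)).
Qed.
Lemma gcancel_cen (H : isgrp op inv e) P Q w :
  op (op P w) (inv (op Q w)) = op P (inv Q).
Proof. by have [A Un V] := H; rewrite (ginvM H) A gR1. Qed.
End Grp.

Section Brace.
Variables (T : finType) (B : skew_brace T).
Local Notation "a + b" := (badd B a b).
Local Notation "- a" := (bopp B a).
Local Notation "a * b" := (bmul B a b).

Lemma addG : isgrp (badd B) (bopp B) (bzero B).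
Proof. split; [exact: baddA | exact: badd0 | exact: baddN]. Qed.
Lemma mulG : isgrp (bmul B) (binv B) (bone B).
Proof. split; [exact: bmulA | exact: bmul1 | exact: bmulV]. Qed.

Lemma zero_one : bzero B = bone B.
Proof.
have h a : a * bzero B = a.
  have := bbrace B a (bzero B) (bzero B).
  rewrite (proj1 (badd0 B _)) => E.
  have E2 : bzero B + a * bzero B = (a * bzero B + - a) + a * bzero B
    by rewrite (proj1 (badd0 B _)) -E.
  move: E2.
  have Hr x y y' : x + y = y' + y -> x = y'.
    by move=> F; rewrite -(gR1 addG x y) F (gR1 addG).
  move/Hr => F. by rewrite -(gR2 addG (a * bzero B) a) -F (proj1 (badd0 B _)).
by rewrite -(h (bone B)) (proj1 (bmul1 B _)).
Qed.

Definition cen z := forall b, z + b = b + z /\ b + z = z * b /\ z * b = b * z.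

Lemma cenP z : reflect (cen z) (z \in bcentre B).
Proof.
rewrite inE; apply: (iffP forallP) => H b.
  by case/and3P: (H b) => /eqP ? /eqP ? /eqP ?.
by case: (H b) => -> [-> ->]; rewrite !eqxx.
Qed.

Lemma cen_add z : cen z -> forall u, z + u = u + z.
Proof. by move=> h u; case: (h u). Qed.
Lemma cen_mul z : cen z -> forall u, z * u = u * z.
Proof. by move=> h u; case: (h u) => _ []. Qed.
Lemma cen_am z : cen z -> forall u, u + z = z * u.
Proof. by move=> h u; case: (h u) => _ []. Qed.
Lemma cen_sm z s : cen z -> s + z = s * z.
Proof. by move=> h; rewrite (cen_am h s) (cen_mul h s). Qed.

Lemma cen0 : cen (bzero B).
Proof.
move=> b; rewrite (proj1 (badd0 B b)) (proj2 (badd0 B b)) zero_one.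
by rewrite (proj1 (bmul1 B b)) (proj2 (bmul1 B b)).
Qed.

Lemma cenD z z' : cen z -> cen z' -> cen (z + z').
Proof.
move=> hz hz' b; split; [|split].
- by rewrite -baddA (cen_add hz' b) baddA (cen_add hz b) -baddA.
- by rewrite [in RHS](cen_am hz' z) -bmulA -(cen_am hz b) -(cen_am hz' (b+z)) -baddA.
- rewrite !(cen_am hz' z) -bmulA (cen_mul hz b) bmulA (cen_mul hz' b).
  by rewrite -bmulA.
Qed.

Lemma inv_opp z : cen z -> binv B z = - z.
Proof.
move=> hz; apply: (gcancel mulG (x := z)).
by rewrite (proj2 (bmulV B z)) -cen_am // (proj1 (baddN B z)) zero_one.
Qed.

Lemma cenN z : cen z -> cen (- z).
Proof.
move=> hz; rewrite -inv_opp //.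
have hm := ginv_cen mulG (cen_mul hz).
move=> b; split; [|split]; last by rewrite hm.
- rewrite inv_opp //; exact: (ginv_cen addG (cen_add hz)).
- apply: (gcancel mulG (x := z)); rewrite (bmulA B z (binv B z) b).
  rewrite (proj2 (bmulV B z)) (proj1 (bmul1 B b)) -cen_am // inv_opp //.
  by rewrite (gR2 addG).
Qed.

Lemma subP S : is_subbrace B S ->
  [/\ bzero B \in S, bone B \in S,
   forall a b, a \in S -> b \in S -> (a + b \in S) /\ (a * b \in S) &
   forall a, a \in S -> (- a \in S) /\ (binv B a \in S)].
Proof.
case/and4P => h0 h1 /forallP h2 /forallP h3; split => //.
  move=> a b aS bS; move: (h2 a); rewrite aS /= => /forallP /(_ b).
  by rewrite bS /= => /andP.
by move=> a aS; move: (h3 a); rewrite aS /= => /andP.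
Qed.

Theorem part1 S : is_maximal_subbrace B S ->
     (bcentre B \subset S) \/ (bderived B \subset S).
Proof.
case/and3P => Ssub SnT /forallP Smax.
have [S0 S1 SM SI] := subP Ssub.
have [sZ|/subsetPn [z0 z0Z z0S]] := boolP (bcentre B \subset S); first by left.
right.
pose SZ := [set b | [exists s, exists z, (s \in S) && (z \in bcentre B) && (b == s + z)]].
have SZP b : b \in SZ -> exists s z, [/\ s \in S, cen z & b = s + z].
  rewrite inE => /existsP [s /existsP [z /andP [/andP [sS /cenP zZ] /eqP ->]]].
  by exists s, z.
have SZI s z : s \in S -> cen z -> s + z \in SZ.
  move=> sS zc; rewrite inE; apply/existsP; exists s; apply/existsP; exists z.
  by rewrite sS eqxx andbT; apply/cenP.
have SZsub : is_subbrace B SZ.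
  apply/and4P; split.
  - by rewrite -(proj2 (badd0 B (bzero B))); apply: SZI => //; exact: cen0.
  - by rewrite -zero_one -(proj2 (badd0 B (bzero B))); apply: SZI => //; exact: cen0.
  - apply/forallP => a; apply/implyP => /SZP [s [z [sS zc ->]]].
    apply/forallP => b; apply/implyP => /SZP [s' [z' [sS' zc' ->]]].
    apply/andP; split.
      rewrite (gop_cen addG _ _ _ (cen_add zc)); apply: SZI.
        by case: (SM _ _ sS sS').
      exact: (cenD zc zc').
    rewrite (cen_sm s zc) (cen_sm s' zc') (gop_cen mulG _ _ _ (cen_mul zc)).
    rewrite -(cen_am zc z') -(cen_sm _ (cenD zc' zc)).
    by apply: SZI; [case: (SM _ _ sS sS') | exact: (cenD zc' zc)].
  - apply/forallP => a; apply/implyP => /SZP [s [z [sS zc ->]]].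
    apply/andP; split.
      rewrite (ginvM addG) (ginv_cen addG (cen_add zc)); apply: SZI.
        by case: (SI _ sS).
      exact: (cenN zc).
    rewrite (cen_sm s zc) (ginvM mulG) (ginv_cen mulG (cen_mul zc)) (inv_opp zc).
    rewrite -(cen_sm _ (cenN zc)).
    by apply: SZI; [case: (SI _ sS) | exact: (cenN zc)].
have SZT : SZ = setT.
  apply/eqP; apply: contraT => nT.
  have := Smax SZ; rewrite SZsub nT /=.
  have -> : S \subset SZ.
    apply/subsetP => s sS; rewrite -(proj2 (badd0 B s)); apply: SZI => //; exact: cen0.
  move=> /eqP E; move: z0S; rewrite -E -(proj1 (badd0 B z0)).
  by rewrite SZI //; apply/cenP.
have dec b : exists s z, [/\ s \in S, cen z & b = s + z].
  by apply: SZP; rewrite SZT inE.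
have Sid : is_ideal B S.
  apply/and3P; split => //.
    apply/forallP => a; apply/implyP => aS; apply/forallP => b.
    have [s [z [sS zc ->]]] := dec b.
    apply/andP; split.
      rewrite (gconj addG _ _ (cen_add zc)).
      by case: (SI _ sS) => h _; case: (SM _ _ (proj1 (SM _ _ sS aS)) h).
    rewrite (cen_sm s zc) (gconj mulG _ _ (cen_mul zc)).
    by case: (SI _ sS) => _ h; case: (SM _ _ (proj2 (SM _ _ sS aS)) h).
  apply/forallP => a; apply/implyP => aS; apply/forallP => b.
  have [s [z [sS zc ->]]] := dec b.
  rewrite /blambda (ginvM addG) (ginv_cen addG (cen_add zc)).
  rewrite (cen_sm s zc) -(cen_mul zc s) -bmulA -(cen_am zc (s * a)) -baddA.
  rewrite -(cen_add zc (s * a)) (baddA B (- z) z (s * a)) (proj1 (baddN B z)) (proj1 (badd0 B _)).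
  by case: (SI _ sS) => h _; case: (SM _ _ h (proj2 (SM _ _ sS aS))).
apply: (subset_trans (bigcap_inf _ _)); last exact: subxx.
rewrite Sid /=; apply/subsetP => x; rewrite inE.
move=> /existsP [a /existsP [b /or3P [] /eqP ->]].
- have [s [z [sS zc ->]]] := dec a; have [s' [z' [sS' zc' ->]]] := dec b.
  rewrite (gcomm addG _ _ (cen_add zc) (cen_add zc')).
  case: (SI _ sS) => h _; case: (SI _ sS') => h' _.
  exact: (proj1 (SM _ _ (proj1 (SM _ _ (proj1 (SM _ _ sS sS')) h)) h')).
- have [s [z [sS zc ->]]] := dec a; have [s' [z' [sS' zc' ->]]] := dec b.
  rewrite (cen_sm s zc) (cen_sm s' zc') (gcomm mulG _ _ (cen_mul zc) (cen_mul zc')).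
  case: (SI _ sS) => _ h; case: (SI _ sS') => _ h'.
  by case: (SM _ _ (proj2 (SM _ _ (proj2 (SM _ _ sS sS')) h)) h').
- have [s [z [sS zc ->]]] := dec a; have [s' [z' [sS' zc' ->]]] := dec b.
  rewrite (gop_cen addG _ _ _ (cen_add zc)) (cen_sm s zc) (cen_sm s' zc').
  rewrite (gop_cen mulG _ _ _ (cen_mul zc)) -(cen_am zc z') -(cen_sm _ (cenD zc' zc)).
  rewrite (cen_add zc z') (gcancel_cen addG).
  have [k _] := SI _ (proj1 (SM _ _ sS sS')).
  by case: (SM _ _ (proj2 (SM _ _ sS sS')) k).
Qed.
End Brace.

Theorem corollary4p9 (T : finType) (B : skew_brace T) :
  (forall S : {set T}, is_maximal_subbrace B S ->
     (bcentre B \subset S) \/ (bderived B \subset S)) /\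
  (bcentre B :&: bderived B \subset bfrattini B).
Proof.
split; first exact: part1.
apply/subsetP => x; rewrite inE => /andP [xz xd].
apply/bigcapP => M HM.
by case: (part1 HM) => /subsetP; apply.
Qed.
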